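(* Let $X$ be a complete CAT(0) space, $T:X\to X$ nonexpansive, and $(\gamma_n)$ a sequence of positive reals. Then the family $(R_{T,\gamma_n})_{n\in\mathbb{N}}$ is jointly firmly nonexpansive with respect to $(\gamma_n)$.
   Context: A geodesic space $(X,d)$ is CAT(0) if for all $z\in X$, all geodesics $\gamma:[a,b]\to X$ and all $t\in[0,1]$, $d^2(z,\gamma((1-t)a+tb))\le(1-t)d^2(z,\gamma(a))+td^2(z,\gamma(b))-t(1-t)d^2(\gamma(a),\gamma(b))$; $(1-t)x+ty$ denotes the point at distance $t\,d(x,y)$ from $x$ on the unique geodesic from $x$ to $y$. For $\gamma>0$ and $x\in X$, $R_{T,\gamma}x$ is the unique fixed point of the contraction $y\mapsto\frac1{1+\gamma}x+\frac{\gamma}{1+\gamma}Ty$, i.e. $R_{T,\gamma}x=\frac1{1+\gamma}x+\frac\gamma{1+\gamma}TR_{T,\gamma}x$ (the resolvent of order $\gamma$ of $T$). $(T_n)$ is jointly firmly nonexpansive w.r.t. $(\gamma_n)$ if for all $n,m$, $x,y\in X$, $\alpha,\beta\in[0,1]$ with $(1-\alpha)\gamma_n=(1-\beta)\gamma_m$: $d(T_nx,T_my)\le d((1-\alpha)x+\alpha T_nx,(1-\beta)y+\beta T_my)$. *)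

(* Defs.v *)
From Stdlib Require Import Reals Lra ClassicalEpsilon.
Open Scope R_scope.

Section Defs.
Context {X : Type} (d : X -> X -> R).

Definition is_metric : Prop :=
  (forall x y, 0 <= d x y) /\
  (forall x y, d x y = 0 <-> x = y) /\
  (forall x y, d x y = d y x) /\
  (forall x y z, d x z <= d x y + d y z).

Definition complete : Prop :=
  forall u : nat -> X,
    (forall eps, eps > 0 -> exists N, forall n m, (n >= N)%nat -> (m >= N)%nat -> d (u n) (u m) < eps) ->
    exists l, forall eps, eps > 0 -> exists N, forall n, (n >= N)%nat -> d (u n) l < eps.

Definition geodesic (gam : R -> X) (a b : R) : Prop :=
  a <= b /\ forall s t, a <= s <= b -> a <= t <= b -> d (gam s) (gam t) = Rabs (s - t).

Definition geodesic_space : Prop :=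
  forall x y, exists gam, geodesic gam 0 (d x y) /\ gam 0 = x /\ gam (d x y) = y.

Definition CAT0 : Prop :=
  geodesic_space /\
  forall z (gam : R -> X) a b t, geodesic gam a b -> 0 <= t <= 1 ->
    (d z (gam ((1 - t) * a + t * b)))^2 <=
      (1 - t) * (d z (gam a))^2 + t * (d z (gam b))^2 - t * (1 - t) * (d (gam a) (gam b))^2.

(* (1-t)x + t y : the point at distance t d(x,y) from x on the (unique) geodesic from x to y *)
Definition geo_pt (x y : X) (t : R) : X :=
  epsilon (inhabits x) (fun z => exists gam, geodesic gam 0 (d x y) /\ gam 0 = x /\
                                   gam (d x y) = y /\ z = gam (t * d x y)).

Definition nonexpansive (T : X -> X) : Prop := forall x y, d (T x) (T y) <= d x y.

(* resolvent of order g of T: the fixed point of y |-> 1/(1+g) x + g/(1+g) T y *)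
Definition resolvent (T : X -> X) (g : R) (x : X) : X :=
  epsilon (inhabits x) (fun z => z = geo_pt x (T z) (g / (1 + g))).

Definition jointly_firmly_nonexpansive (Tn : nat -> X -> X) (g : nat -> R) : Prop :=
  forall n m x y al be, 0 <= al <= 1 -> 0 <= be <= 1 ->
    (1 - al) * g n = (1 - be) * g m ->
    d (Tn n x) (Tn m y) <= d (geo_pt x (Tn n x) al) (geo_pt y (Tn m y) be).

End Defs.

(* Main.v *)
Require Import Defs.
From Stdlib Require Import Reals.
From Stdlib Require Import Lra Psatz ClassicalEpsilon.
Open Scope R_scope.

Section Aux.
Variables (X : Type) (d : X -> X -> R).
Hypothesis Hm : is_metric d.
Hypothesis Hc : CAT0 d.

Lemma d_nonneg x y : 0 <= d x y.
Proof. destruct Hm as [H _]; apply H. Qed.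
Lemma d_sym x y : d x y = d y x.
Proof. destruct Hm as [_ [_ [H _]]]; apply H. Qed.
Lemma d_tri x y z : d x z <= d x y + d y z.
Proof. destruct Hm as [_ [_ [_ H]]]; apply H. Qed.
Lemma d_eq0 x y : d x y = 0 -> x = y.
Proof. destruct Hm as [_ [H _]]; apply H. Qed.
Lemma d_refl x : d x x = 0.
Proof. destruct Hm as [_ [H _]]; apply H; reflexivity. Qed.

Lemma geo_spec x y t : exists gam, geodesic d gam 0 (d x y) /\ gam 0 = x /\
  gam (d x y) = y /\ geo_pt d x y t = gam (t * d x y).
Proof.
  unfold geo_pt.
  apply (epsilon_spec (inhabits x) (fun z => exists gam, geodesic d gam 0 (d x y) /\ gam 0 = x /\
                                   gam (d x y) = y /\ z = gam (t * d x y))).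
  destruct Hc as [Hg _]. destruct (Hg x y) as [gam [G [G0 G1]]].
  exists (gam (t * d x y)), gam. auto.
Qed.

Lemma CN x y t z : 0 <= t <= 1 ->
  d z (geo_pt d x y t) ^ 2 <= (1 - t) * d z x ^ 2 + t * d z y ^ 2 - t * (1 - t) * d x y ^ 2.
Proof.
  intros Ht. destruct (geo_spec x y t) as [gam [G [G0 [G1 E]]]]. rewrite E.
  destruct Hc as [_ H]. pose proof (H z gam 0 (d x y) t G Ht) as H0.
  replace ((1 - t) * 0 + t * d x y) with (t * d x y) in H0 by ring.
  rewrite G0, G1 in H0. exact H0.
Qed.

Lemma geo_d1 x y t : 0 <= t <= 1 -> d x (geo_pt d x y t) = t * d x y.
Proof.
  intros Ht. destruct (geo_spec x y t) as [gam [G [G0 [G1 E]]]]. rewrite E.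
  pose proof (d_nonneg x y).
  destruct G as [_ G]. rewrite <- G0 at 1. rewrite G.
  - replace (0 - t * d x y) with (- (t * d x y)) by ring. rewrite Rabs_Ropp.
    apply Rabs_pos_eq. nra.
  - lra.
  - nra.
Qed.

Lemma geo_d2 x y t : 0 <= t <= 1 -> d (geo_pt d x y t) y = (1 - t) * d x y.
Proof.
  intros Ht. destruct (geo_spec x y t) as [gam [G [G0 [G1 E]]]]. rewrite E.
  pose proof (d_nonneg x y).
  destruct G as [_ G]. rewrite <- G1 at 2. rewrite G.
  - rewrite Rabs_left1. ring. nra.
  - nra.
  - lra.
Qed.

Lemma geo_char x y t z : 0 <= t <= 1 -> d x z = t * d x y -> d z y = (1 - t) * d x y ->
  geo_pt d x y t = z.
Proof.
  intros Ht H1 H2. pose proof (CN x y t z Ht) as C.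
  rewrite (d_sym z x), H1, H2 in C.
  assert (d z (geo_pt d x y t) ^ 2 <= 0) by nra.
  pose proof (d_nonneg z (geo_pt d x y t)).
  assert (d z (geo_pt d x y t) = 0) by nra.
  symmetry. apply d_eq0. auto.
Qed.

Lemma geo_contr x a b t : 0 <= t <= 1 ->
  d (geo_pt d x a t) (geo_pt d x b t) <= t * d a b.
Proof.
  intros Ht.
  pose proof (CN x b t (geo_pt d x a t) Ht) as C1.
  pose proof (CN x a t b Ht) as C2.
  rewrite (d_sym (geo_pt d x a t) x), (geo_d1 x a t Ht) in C1.
  rewrite (d_sym (geo_pt d x a t) b) in C1.
  rewrite (d_sym b x), (d_sym b a) in C2.
  assert (C3 : t * d b (geo_pt d x a t) ^ 2 <=
     t * ((1 - t) * d x b ^ 2 + t * d a b ^ 2 - t * (1 - t) * d x a ^ 2)).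
  { apply Rmult_le_compat_l; lra. }
  assert (d (geo_pt d x a t) (geo_pt d x b t) ^ 2 <= (t * d a b) ^ 2) by nra.
  pose proof (d_nonneg (geo_pt d x a t) (geo_pt d x b t)).
  pose proof (d_nonneg a b).
  assert (0 <= t * d a b) by nra.
  destruct (Rle_or_lt (d (geo_pt d x a t) (geo_pt d x b t)) (t * d a b)) as [L|L]; auto.
  exfalso. assert ((t * d a b) ^ 2 < d (geo_pt d x a t) (geo_pt d x b t) ^ 2).
  { simpl. rewrite !Rmult_1_r. apply Rmult_le_0_lt_compat; lra. }
  lra.
Qed.

Lemma geo_sym p b t : 0 <= t <= 1 -> geo_pt d p b t = geo_pt d b p (1 - t).
Proof.
  intros Ht. symmetry. apply geo_char. lra.
  - rewrite d_sym, geo_d2; [|lra]. rewrite d_sym. ring.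
  - rewrite d_sym, geo_d1; [|lra]. rewrite (d_sym p b). ring.
Qed.

Lemma busemann p q a b t : 0 <= t <= 1 ->
  d (geo_pt d p a t) (geo_pt d q b t) <= (1 - t) * d p q + t * d a b.
Proof.
  intros Ht.
  pose proof (d_tri (geo_pt d p a t) (geo_pt d p b t) (geo_pt d q b t)) as T1.
  pose proof (geo_contr p a b t Ht) as T2.
  rewrite (geo_sym p b t Ht) in T1, T2. rewrite (geo_sym q b t Ht) in T1 |- *.
  pose proof (geo_contr b p q (1 - t) ltac:(lra)) as T3.
  lra.
Qed.

Lemma geo_1 x u : geo_pt d x u 1 = u.
Proof. apply geo_char. lra. ring. rewrite d_refl. ring. Qed.

Fixpoint itr (F : X -> X) (n : nat) (x : X) : X :=
  match n with O => x | S k => F (itr F k x) end.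

Lemma banach (F : X -> X) s (x0 : X) : complete d -> 0 <= s < 1 ->
  (forall y y', d (F y) (F y') <= s * d y y') -> exists z, z = F z.
Proof.
  intros Hcomp Hs HF.
  set (u := fun n => itr F n x0).
  set (C := d (u 1%nat) (u 0%nat)).
  assert (HC : 0 <= C) by apply d_nonneg.
  assert (Step : forall n, d (u (S n)) (u n) <= s ^ n * C).
  { induction n. simpl. unfold C. simpl. lra.
    unfold u. simpl. eapply Rle_trans. apply HF.
    change (itr F n x0) with (u n). change (F (u n)) with (u (S n)).
    rewrite Rmult_assoc. apply Rmult_le_compat_l; lra. }
  assert (Far : forall n k, (1 - s) * d (u (n + k)%nat) (u n) <= C * s ^ n * (1 - s ^ k)).
  { intros n k. induction k.
    - rewrite Nat.add_0_r, d_refl. simpl. lra.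
    - replace (n + S k)%nat with (S (n + k)) by lia.
      pose proof (d_tri (u (S (n + k))) (u (n + k)%nat) (u n)).
      pose proof (Step (n + k)%nat). rewrite pow_add in H0.
      simpl pow.
      assert ((1 - s) * d (u (S (n + k))) (u n) <=
              (1 - s) * (s ^ n * s ^ k * C) + (1 - s) * d (u (n + k)%nat) (u n)).
      { rewrite <- Rmult_plus_distr_l. apply Rmult_le_compat_l; lra. }
      nra. }
  assert (Far2 : forall n m, (n <= m)%nat -> (1 - s) * d (u m) (u n) <= C * s ^ n).
  { intros n m Hnm. replace m with (n + (m - n))%nat by lia.
    eapply Rle_trans. apply Far.
    pose proof (pow_le s (m - n) ltac:(lra)). pose proof (pow_le s n ltac:(lra)).
    assert (0 <= C * s ^ n * s ^ (m - n)) by (apply Rmult_le_pos; [apply Rmult_le_pos|]; lra).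
    lra. }
  destruct (Hcomp u) as [l Hl].
  { intros eps Heps.
    destruct (pow_lt_1_zero s ltac:(rewrite Rabs_pos_eq; lra) (eps * (1 - s) / (C + 1)))
      as [N HN].
    { apply Rdiv_lt_0_compat; nra. }
    exists N. intros n m Hn Hm'.
    assert (K : forall a b, (a >= N)%nat -> (a <= b)%nat -> d (u b) (u a) < eps).
    { intros a b Ha Hab. pose proof (Far2 a b Hab). pose proof (HN a Ha).
      rewrite Rabs_pos_eq in H0 by (apply pow_le; lra).
      assert (s ^ a * (C + 1) < eps * (1 - s)).
      { apply (Rmult_lt_compat_r (C + 1)) in H0; [|lra].
        unfold Rdiv in H0. rewrite Rmult_assoc, Rinv_l in H0; lra. }
      pose proof (pow_le s a ltac:(lra)).
      assert ((1 - s) * d (u b) (u a) < (1 - s) * eps) by nra.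
      nra. }
    destruct (Nat.le_ge_cases n m).
    - rewrite d_sym. apply K; auto.
    - apply K; auto. }
  exists l.
  assert (d (F l) l = 0).
  { destruct (Req_dec (d (F l) l) 0) as [E|E]; auto.
    pose proof (d_nonneg (F l) l).
    destruct (Hl (d (F l) l / 2) ltac:(lra)) as [N HN].
    pose proof (HN N ltac:(lia)) as Q1. pose proof (HN (S N) ltac:(lia)) as Q2.
    pose proof (d_tri (F l) (u (S N)) l) as Q3.
    assert (Q4 : d (F l) (u (S N)) <= s * d l (u N)).
    { unfold u; simpl. apply HF. }
    rewrite (d_sym l) in Q4. pose proof (d_nonneg (u N) l). nra. }
  symmetry. apply d_eq0. auto.
Qed.

Lemma sfrac g : 0 < g -> 0 < g / (1 + g) < 1 /\ 1 - g / (1 + g) = 1 / (1 + g).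
Proof.
  intros Hg. split; [split|].
  - apply Rdiv_lt_0_compat; lra.
  - apply (Rmult_lt_reg_r (1 + g)). lra. unfold Rdiv. rewrite Rmult_assoc, Rinv_l; lra.
  - field. lra.
Qed.

Lemma res_spec T g x : complete d -> nonexpansive d T -> 0 < g ->
  resolvent d T g x = geo_pt d x (T (resolvent d T g x)) (g / (1 + g)).
Proof.
  intros Hcomp HT Hg. unfold resolvent.
  apply (epsilon_spec (inhabits x) (fun z => z = geo_pt d x (T z) (g / (1 + g)))).
  destruct (sfrac g Hg) as [[H1 H2] _].
  apply (banach (fun y => geo_pt d x (T y) (g / (1 + g))) (g / (1 + g)) x Hcomp).
  lra.
  intros y y'. eapply Rle_trans. apply geo_contr; lra.
  apply Rmult_le_compat_l. lra. apply HT.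
Qed.

Lemma collin x u Tu g al : 0 < g -> 0 <= al < 1 -> u = geo_pt d x Tu (g / (1 + g)) ->
  u = geo_pt d (geo_pt d x u al) Tu ((1 - al) * g / (1 + (1 - al) * g)).
Proof.
  intros Hg Hal Hu.
  destruct (sfrac g Hg) as [[H1 H2] H3].
  set (s := g / (1 + g)) in *.
  assert (Hg' : 0 < (1 - al) * g) by nra.
  destruct (sfrac _ Hg') as [[L1 L2] L3].
  replace ((1 - al) * g / (1 + (1 - al) * g)) with ((1 - al) * g / (1 + (1 - al) * g))
    by reflexivity.
  set (lam := (1 - al) * g / (1 + (1 - al) * g)) in *.
  set (D := d x Tu).
  assert (E1 : d x u = s * D) by (rewrite Hu; apply geo_d1; lra).
  assert (E2 : d u Tu = (1 - s) * D) by (rewrite Hu at 1; apply geo_d2; lra).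
  set (p := geo_pt d x u al).
  assert (E3 : d x p = al * (s * D)) by (unfold p; rewrite geo_d1; [rewrite E1; ring|lra]).
  assert (E4 : d p u = (1 - al) * (s * D)) by (unfold p; rewrite geo_d2; [rewrite E1; ring|lra]).
  pose proof (d_tri p u Tu). pose proof (d_tri x p Tu).
  assert (E5 : d p Tu = (1 - al * s) * D) by (fold D in H0; lra).
  assert (F1 : lam * (1 - al * s) = (1 - al) * s).
  { unfold lam, s. field. split; lra. }
  assert (F2 : (1 - lam) * (1 - al * s) = 1 - s).
  { unfold lam, s. field. split; lra. }
  symmetry. apply geo_char. lra.
  - rewrite E4, E5. transitivity ((lam * (1 - al * s)) * D); [rewrite F1; ring | ring].
  - rewrite E2, E5. transitivity (((1 - lam) * (1 - al * s)) * D); [rewrite F2; ring | ring].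
Qed.

End Aux.

Theorem proposition3p19 (X : Type) (d : X -> X -> R) (T : X -> X) (g : nat -> R) :
  is_metric d -> complete d -> CAT0 d -> nonexpansive d T ->
  (forall n, 0 < g n) ->
  jointly_firmly_nonexpansive d (fun n => resolvent d T (g n)) g.
Proof.
  intros Hm Hcomp Hc HT Hg.
  unfold jointly_firmly_nonexpansive. intros n m x y al be Ha Hb Heq. cbv beta.
  set (u := resolvent d T (g n) x). set (v := resolvent d T (g m) y).
  assert (Hu : u = geo_pt d x (T u) (g n / (1 + g n))) by (apply res_spec; auto).
  assert (Hv : v = geo_pt d y (T v) (g m / (1 + g m))) by (apply res_spec; auto).
  pose proof (Hg n). pose proof (Hg m).
  destruct (Req_dec al 1) as [E|E].
  - assert (be = 1) by (subst al; nra). subst al be.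
    rewrite !geo_1; auto. lra.
  - assert (al < 1) by lra.
    assert (be < 1) by nra.
    pose proof (collin X d Hm Hc x u (T u) (g n) al H ltac:(lra) Hu) as Pu.
    pose proof (collin X d Hm Hc y v (T v) (g m) be H0 ltac:(lra) Hv) as Pv.
    rewrite <- Heq in Pv.
    set (lam := (1 - al) * g n / (1 + (1 - al) * g n)) in *.
    assert (Hg' : 0 < (1 - al) * g n) by nra.
    destruct (sfrac _ Hg') as [[L1 L2] L3]. fold lam in L1, L2.
    pose proof (busemann X d Hm Hc (geo_pt d x u al) (geo_pt d y v be) (T u) (T v) lam
                 ltac:(lra)) as B.
    rewrite <- Pu, <- Pv in B.
    pose proof (HT u v).
    nra.
Qed.
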